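(* Let $n<N$ be powers of $2$ and let $\delta=N/n$. Let $S_m$ (for $m$ a power of $4$) denote the STOne matrices: $S_4=\frac12\begin{pmatrix}-1&1&1&1\\ 1&-1&1&1\\ 1&1&-1&1\\ 1&1&1&-1\end{pmatrix}$ and $S_{4^{k+1}}=S_4\otimes S_{4^k}$ for $k\ge1$ (Kronecker product). Let $P=I_{n^2}\otimes 1_{\delta^2}$, an $N^2\times n^2$ matrix, where $1_{\delta^2}$ is the $\delta^2\times 1$ vector of ones. Let $R$ be an $N^2\times N^2$ diagonal matrix with diagonal entries in $\{0,1\}$, written in block-diagonal form $R=\mathrm{diag}(R_1,\dots,R_{n^2})$ with each $R_i$ a $\delta^2\times\delta^2$ diagonal block, and let $b\in\mathbb{R}^{N^2}$ satisfy $Rb=b$, written in blocks $b=(b_1;\dots;b_{n^2})$ with $b_i=(b_{i,1},\dots,b_{i,\delta^2})\in\mathbb{R}^{\delta^2}$. Consider the preview equation $R S_{N^2} P u = b$ for $u\in\mathbb{R}^{n^2}$. (i) If each $R_i$ has exactly one nonzero diagonal entry, then the preview equation has a unique solution, given by $u=S_{n^2}\bar b$, where $\bar b\in\mathbb{R}^{n^2}$ has $i$-th entry equal to the entry of $b_i$ at the position of the nonzero diagonal entry of $R_i$. (ii) If each $R_i$ has at least one nonzero diagonal entry, then the least-squares solution of the preview equation, i.e. the minimizer of $\|R S_{N^2}Pu-b\|^2$ over $u\in\mathbb{R}^{n^2}$, is $u=S_{n^2}\hat b$, where $\hat b_i=\left(\sum_{\gamma=1}^{\delta^2} b_{i,\gamma}\right)\big/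 \mathrm{tr}(R_i)$, i.e. $\hat b_i$ is the mean of the entries of $b_i$ at the positions selected by $R_i$.
   Context: Interpretation: an $N\times N$ image is vectorized so that each of the $n^2$ non-overlapping $\delta\times\delta$ patches occupies a contiguous block of $\delta^2$ entries; $P$ is then the prolongation operator replacing each pixel of an $n\times n$ image by a constant $\delta\times\delta$ patch. $R$ is a ''row selector'': $R_{j,j}=1$ iff row $j$ of $S_{N^2}$ has been measured, and $b$ is the measurement vector, whose entries at unmeasured positions are zero (i.e. $Rb=b$); the ''known entries'' of $b$ are those at positions where $R$ has a $1$. Note $S_{N^2}=S_{n^2}\otimes S_{\delta^2}$. *)

(* Defs.v *)
From HB Require Import structures.
From mathcomp Require Import all_boot all_order all_algebra.
Set Implicit Arguments. Unset Strict Implicit. Unset Printing Implicit Defensive.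
Import Order.TTheory GRing.Theory Num.Theory.
Local Open Scope ring_scope.

Definition S4e {R : realFieldType} (i j : nat) : R :=
  (if i == j then -1 else 1) / 2.

(* Entries of the STone matrix S_{4^k}, with S_{4^(k+1)} = S_4 (x) S_{4^k}
   (Kronecker product, outer index = S_4 index, row-major), and the
   convention S_{4^0} = S_1 = [1] (so that S_4 = S_4 (x) S_1). *)
Fixpoint STonee {R : realFieldType} (k : nat) (i j : nat) : R :=
  match k with
  | 0 => 1
  | k'.+1 => S4e (i %/ 4 ^ k') (j %/ 4 ^ k') * STonee k' (i %% 4 ^ k') (j %% 4 ^ k')
  end.

Definition STone {R : realFieldType} (k : nat) : 'M[R]_(4 ^ k) :=
  \matrix_(i, j) STonee k i j.

(* With n = 2^a, N = 2^c, delta = N/n: index j of R^{N^2} lies in patch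
   (block) number j %/ delta^2, where delta^2 = 4^(c-a). *)
Definition blk (a c : nat) (j : nat) : nat := (j %/ 4 ^ (c - a))%N.

Definition Pmx {R : realFieldType} (a c : nat) : 'M[R]_(4 ^ c, 4 ^ a) :=
  \matrix_(j, i) (blk a c j == i)%:R.

Definition sqnorm {R : realFieldType} {m : nat} (x : 'cV[R]_m) : R :=
  \sum_(j < m) (x j 0) ^+ 2.

(* Main.v *)
Require Import Defs.
From HB Require Import structures.
From mathcomp Require Import all_boot all_order all_algebra.
From mathcomp Require Import zify ring lra.
Import Order.TTheory GRing.Theory Num.Theory.
Local Open Scope ring_scope.

Lemma sum_split (R : realFieldType) m k (F : nat -> R) :
  \sum_(0 <= j < m * k) F j = \sum_(0 <= q < m) \sum_(0 <= g < k) F (q * k + g)%N.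
Proof.
elim: m => [|m IH]; first by rewrite mul0n !big_geq.
rewrite mulSnr (@big_cat_nat _ _ _ (m * k)) ?leq_addr // IH big_nat_recr //=.
congr (_ + _).
rewrite -{1}[(m * k)%N]add0n big_addn addKn.
by apply: eq_bigr => g _; rewrite addnC.
Qed.

Lemma STonee_split (R : realFieldType) m k i j :
  (i < 4 ^ (m + k))%N -> (j < 4 ^ (m + k))%N ->
  STonee (R:=R) (m + k) i j =
  STonee m (i %/ 4 ^ k) (j %/ 4 ^ k) * STonee k (i %% 4 ^ k) (j %% 4 ^ k).
Proof.
elim: m i j => [|m IH] i j hi hj.
    by rewrite add0n in hi hj *; rewrite /= !modn_small // mul1r.
rewrite addSn /= IH ?ltn_mod ?expn_gt0 //.
rewrite -!divnMA -!expnD (addnC k m) !modn_divl -!expnD.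
rewrite !(@modn_dvdm (4 ^ (m + k)) _ (4 ^ k)) ?dvdn_exp2l ?leq_addl //.
by rewrite mulrA.
Qed.

Lemma S4_rowsum (R : realFieldType) x : (x < 4)%N -> \sum_(0 <= q < 4) S4e (R:=R) x q = 1.
Proof.
case: x => [|[|[|[|x]]]] // _; rewrite /index_iota /= !big_cons big_nil /S4e /=; lra.
Qed.

Lemma S4_orth (R : realFieldType) x y : (x < 4)%N -> (y < 4)%N ->
  \sum_(0 <= q < 4) S4e (R:=R) x q * S4e q y = (x == y)%:R.
Proof.
case: x => [|[|[|[|x]]]] // _; case: y => [|[|[|[|y]]]] // _;
  rewrite /index_iota /= !big_cons big_nil /S4e /=; lra.
Qed.

Lemma STonee_rowsum (R : realFieldType) d r : (r < 4 ^ d)%N ->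
  \sum_(0 <= g < 4 ^ d) STonee (R:=R) d r g = 1.
Proof.
elim: d r => [|d IH] r hr.
  by rewrite expn0 big_nat1.
rewrite expnS sum_split.
transitivity (\sum_(0 <= q < 4) S4e (R:=R) (r %/ 4 ^ d) q *
                \sum_(0 <= g < 4 ^ d) STonee (R:=R) d (r %% 4 ^ d) g).
  apply: eq_big_nat => q hq; rewrite mulr_sumr; apply: eq_big_nat => g /andP[_ hg] /=.
  by rewrite divnMDl ?expn_gt0 // (divn_small hg) addn0 modnMDl (modn_small hg).
rewrite IH ?ltn_mod ?expn_gt0 //.
under eq_bigr do rewrite mulr1.
by apply: S4_rowsum; rewrite ltn_divLR ?expn_gt0 // -expnS.
Qed.

Lemma STonee_inv (R : realFieldType) k i j : (i < 4 ^ k)%N -> (j < 4 ^ k)%N ->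
  \sum_(0 <= l < 4 ^ k) STonee (R:=R) k i l * STonee k l j = (i == j)%:R.
Proof.
elim: k i j => [|d IH] i j hi hj.
  move: hi hj; rewrite expn0 !ltnS !leqn0 => /eqP-> /eqP->.
  by rewrite big_nat1 /= mulr1.
rewrite expnS sum_split.
transitivity (\sum_(0 <= q < 4) S4e (R:=R) (i %/ 4 ^ d) q * S4e q (j %/ 4 ^ d) *
                \sum_(0 <= g < 4 ^ d) STonee (R:=R) d (i %% 4 ^ d) g * STonee d g (j %% 4 ^ d)).
  apply: eq_big_nat => q hq; rewrite mulr_sumr; apply: eq_big_nat => g /andP[_ hg] /=.
  rewrite divnMDl ?expn_gt0 // (divn_small hg) addn0 modnMDl (modn_small hg).
  by rewrite mulrACA.
rewrite IH ?ltn_mod ?expn_gt0 // -big_distrl /= S4_orth;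
  try by rewrite ltn_divLR ?expn_gt0 // -expnS.
rewrite -natrM mulnb.
have -> : (i == j) = ((i %/ 4 ^ d == j %/ 4 ^ d) && (i %% 4 ^ d == j %% 4 ^ d))%N => //.
apply/eqP/andP => [->|[/eqP e1 /eqP e2]]; first by [].
by rewrite (divn_eq i (4 ^ d)) (divn_eq j (4 ^ d)) e1 e2.
Qed.

Lemma sum_ind (R : realFieldType) (n x : nat) (f : nat -> R) : (x < n)%N ->
  \sum_(0 <= q < n) (x == q)%:R * f q = f x.
Proof.
move=> hx; rewrite (bigD1_seq x) ?mem_index_iota ?iota_uniq //= eqxx mul1r.
by rewrite big1 ?addr0 // => q /negbTE; rewrite eq_sym => ->; rewrite mul0r.
Qed.

Lemma blk_lt a c j : (a <= c)%N -> (j < 4 ^ c)%N -> (blk a c j < 4 ^ a)%N.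
Proof.
by move=> hac hj; rewrite /blk ltn_divLR ?expn_gt0 // -expnD subnKC.
Qed.

Lemma SP (R : realFieldType) a c : (a <= c)%N ->
  STone c *m Pmx a c = Pmx a c *m STone a :> 'M[R]_(4 ^ c, 4 ^ a).
Proof.
move=> hac; apply/matrixP => j i; rewrite !mxE.
have -> : \sum_(k < 4 ^ c) STone (R:=R) c j k * Pmx a c k i
    = \sum_(0 <= k < 4 ^ c) STonee c j k * (blk a c k == i)%:R.
  by rewrite big_mkord; apply: eq_bigr => k _; rewrite !mxE.
have -> : \sum_(k < 4 ^ a) Pmx (R:=R) a c j k * STone a k i
    = \sum_(0 <= k < 4 ^ a) (blk a c j == k)%:R * STonee a k i.
  by rewrite big_mkord; apply: eq_bigr => k _; rewrite !mxE.
rewrite sum_ind ?blk_lt //.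
move: (ltn_ord j) (ltn_ord i); move: (nat_of_ord j) (nat_of_ord i) => J I hJ hI.
have [d hd] : exists d, c = (a + d)%N by exists (c - a)%N; rewrite subnKC.
rewrite /blk hd addKn; rewrite hd in hJ.
rewrite expnD sum_split.
rewrite (@eq_big_nat _ _ _ _ _ _ (fun q => STonee a (J %/ 4 ^ d) q * (q == I)%:R)).
  under eq_bigr do rewrite mulrC eq_sym.
  by rewrite sum_ind.
move=> q /andP[_ hq].
have hJd : (J %% 4 ^ d < 4 ^ d)%N by rewrite ltn_mod expn_gt0.
transitivity (STonee a (J %/ 4 ^ d) q * (q == I)%:R *
  \sum_(0 <= g < 4 ^ d) STonee (R:=R) d (J %% 4 ^ d) g); last by rewrite STonee_rowsum // mulr1.
rewrite mulr_sumr; apply: eq_big_nat => g /andP[_ hg].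
have hb : (q * 4 ^ d + g < 4 ^ (a + d))%N.
  rewrite expnD; apply: (@leq_trans (q.+1 * 4 ^ d)).
    by rewrite mulSnr ltn_add2l.
  by rewrite leq_mul2r hq orbT.
rewrite STonee_split // divnMDl ?expn_gt0 // (divn_small hg) addn0 modnMDl (modn_small hg).
by rewrite mulrAC.
Qed.

Lemma diag_mul (R : realFieldType) n (A : 'M[R]_n) (x : 'cV[R]_n) j :
  is_diag_mx A -> (A *m x) j 0 = A j j * x j 0.
Proof.
move=> /is_diag_mxP hA; rewrite mxE (bigD1 j) //= big1 ?addr0 // => k hk.
by rewrite hA ?mul0r // eq_sym.
Qed.

Definition bk a c (hac : (a <= c)%N) (j : 'I_(4 ^ c)) : 'I_(4 ^ a) :=
  Ordinal (@blk_lt a c j hac (ltn_ord j)).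
Arguments bk {a c} hac j.

Lemma Pmx_mul (R : realFieldType) a c (hac : (a <= c)%N) (w : 'cV[R]_(4 ^ a)) j :
  (Pmx a c *m w) j 0 = w (bk hac j) 0.
Proof.
rewrite mxE (bigD1 (bk hac j)) //= mxE eqxx mul1r big1 ?addr0 // => k hk.
rewrite mxE; case: eqP => e; last by rewrite mul0r.
by move: hk; rewrite -val_eqE /= e eqxx.
Qed.

Lemma SS (R : realFieldType) a : STone a *m STone a = 1%:M :> 'M[R]_(4 ^ a).
Proof.
apply/matrixP => i j; rewrite !mxE.
transitivity (\sum_(0 <= l < 4 ^ a) STonee (R:=R) a i l * STonee a l j).
  by rewrite big_mkord; apply: eq_bigr => l _; rewrite !mxE.
by rewrite STonee_inv.
Qed.

Theorem theorem2 (R : realFieldType) (a c : nat) (hac : (a < c)%N)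
    (Rm : 'M[R]_(4 ^ c)) (b : 'cV[R]_(4 ^ c)) :
  is_diag_mx Rm ->
  (forall j, Rm j j = 0 \/ Rm j j = 1) ->
  Rm *m b = b ->
  (* (i) *)
  (forall j0 : 'I_(4 ^ a) -> 'I_(4 ^ c),
     (forall i : 'I_(4 ^ a), blk a c (j0 i) = i) ->
     (forall (i : 'I_(4 ^ a)) (j : 'I_(4 ^ c)),
        blk a c j = i -> (Rm j j != 0 <-> j = j0 i)) ->
     forall u : 'cV[R]_(4 ^ a),
       Rm *m STone c *m Pmx a c *m u = b <->
       u = STone a *m \col_i b (j0 i) 0)
  /\
  (* (ii) *)
  ((forall i : 'I_(4 ^ a), exists j : 'I_(4 ^ c), blk a c j = i /\ Rm j j != 0) ->
   forall u : 'cV[R]_(4 ^ a),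
     (forall v : 'cV[R]_(4 ^ a),
        sqnorm (Rm *m STone c *m Pmx a c *m u - b)
        <= sqnorm (Rm *m STone c *m Pmx a c *m v - b)) <->
     u = STone a *m \col_i ((\sum_(j < 4 ^ c | blk a c j == i) b j 0)
                            / (\sum_(j < 4 ^ c | blk a c j == i) Rm j j))).
Proof.
move=> hD h01 hb.
have hac' : (a <= c)%N := ltnW hac.
have hF (x : 'cV[R]_(4 ^ a)) : Rm *m STone c *m Pmx a c *m x = Rm *m Pmx a c *m (STone a *m x).
  by rewrite -(mulmxA Rm) SP // !mulmxA.
have hE (x : 'cV[R]_(4 ^ a)) j : (Rm *m Pmx a c *m x) j 0 = Rm j j * x (bk hac' j) 0.
  by rewrite -mulmxA diag_mul // Pmx_mul.
have hbj j : b j 0 = Rm j j * b j 0 by rewrite -{1}hb diag_mul.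
have hSinv (x y : 'cV[R]_(4 ^ a)) : (x = STone a *m y) <-> (STone a *m x = y).
  by split=> [->|<-]; rewrite mulmxA SS mul1mx.
have hRge0 j : 0 <= Rm j j by case: (h01 j) => ->; rewrite ?lexx ?ler01.
split.
  move=> j0 hj0 hR u; apply: iff_trans; last (by apply: iff_sym; apply: hSinv); rewrite hF.
  split.
    move=> e; apply/matrixP => i k; rewrite ord1 [in RHS]mxE.
    have := congr1 (fun M : 'cV[R]_(4 ^ c) => M (j0 i) 0) e; rewrite /= hE.
    have -> : bk hac' (j0 i) = i by apply: val_inj; exact: hj0.
    have : Rm (j0 i) (j0 i) != 0 by apply/(hR i (j0 i) (hj0 i)).
    by case: (h01 (j0 i)) => ->; [rewrite eqxx | rewrite mul1r => _ ->].
  move=> e; apply/matrixP => j k; rewrite ord1 hE e mxE.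
  case: (h01 j) => hr; first by rewrite [RHS]hbj hr !mul0r.
  have ej : j = j0 (bk hac' j) by apply/(hR (bk hac' j) j erefl); rewrite hr oner_neq0.
  by rewrite -ej hr mul1r.
move=> hex u; apply: iff_trans; last (by apply: iff_sym; apply: hSinv).
set mh := \col_i _.
set G := fun x : 'cV[R]_(4 ^ a) =>
  \sum_(j < 4 ^ c) Rm j j * (x (bk hac' j) 0 - mh (bk hac' j) 0) ^+ 2.
set K := \sum_(j < 4 ^ c) Rm j j * (mh (bk hac' j) 0 - b j 0) ^+ 2.
have hT (i : 'I_(4 ^ a)) : 0 < \sum_(j < 4 ^ c | blk a c j == i) Rm j j.
  have [j [hj hr]] := hex i.
  have hr1 : Rm j j = 1 by case: (h01 j) hr => -> //; rewrite eqxx.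
  rewrite (bigD1 j) /= ?hj ?eqxx // hr1.
  have : 0 <= \sum_(j' < 4 ^ c | (blk a c j' == i) && (j' != j)) Rm j' j'
    by apply: sumr_ge0 => j' _; exact: hRge0.
  lra.
have key x : sqnorm (Rm *m Pmx a c *m x - b) = G x + K.
  rewrite /sqnorm /G /K.
  have hterm j : (Rm *m Pmx a c *m x - b) j 0 ^+ 2 =
      Rm j j * (x (bk hac' j) 0 - mh (bk hac' j) 0) ^+ 2
    + Rm j j * (mh (bk hac' j) 0 - b j 0) ^+ 2
    + 2 * (Rm j j * (x (bk hac' j) 0 - mh (bk hac' j) 0) * (mh (bk hac' j) 0 - b j 0)).
    have -> : (Rm *m Pmx a c *m x - b) j 0 = (Rm *m Pmx a c *m x) j 0 - b j 0 by rewrite !mxE.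
    rewrite hE; case: (h01 j) => hr.
      by rewrite hbj hr; ring.
    by rewrite hr; ring.
  rewrite (eq_bigr _ (fun j _ => hterm j)) !big_split /= -mulr_sumr.
  have -> : \sum_(j < 4 ^ c) Rm j j * (x (bk hac' j) 0 - mh (bk hac' j) 0) * (mh (bk hac' j) 0 - b j 0) = 0.
    rewrite (partition_big (fun j => bk hac' j) xpredT) //=.
    apply: big1 => i _.
    rewrite (eq_bigr (fun j => (x i 0 - mh i 0) * (Rm j j * mh i 0 - b j 0))); last first.
      by move=> j /eqP <-; rewrite [b j 0 in RHS]hbj; ring.
    rewrite -mulr_sumr sumrB -mulr_suml.
    have hfil : forall j, (bk hac' j == i) = (blk a c j == i) by move=> j; rewrite -val_eqE.
    under eq_bigl do rewrite hfil.
    rewrite mxE.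
    under [X in _ * (_ - X)]eq_bigl do rewrite hfil.
    set T := \sum_(j < 4 ^ c | blk a c j == i) Rm j j.
    set B := \sum_(j < 4 ^ c | blk a c j == i) b j 0.
    rewrite (mulrC T) mulfVK ?subrr ?mulr0 //.
    by rewrite gt_eqF // hT.
  by rewrite mulr0 addr0.
have hG0 x : 0 <= G x.
  by apply: sumr_ge0 => j _; rewrite mulr_ge0 ?sqr_ge0.
have hGmh : G mh = 0.
  by apply: big1 => j _; rewrite subrr expr0n mulr0.
split.
  move=> H; have := H (STone a *m mh); rewrite !hF [STone a *m (STone a *m mh)]mulmxA SS mul1mx !key hGmh add0r.
  move=> hle; apply/matrixP => i k; rewrite ord1.
  have [j [hj hr]] := hex i.
  have hr1 : Rm j j = 1 by case: (h01 j) hr => -> //; rewrite eqxx.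
  have hbk : bk hac' j = i by apply: val_inj.
  have : Rm j j * ((STone a *m u) (bk hac' j) 0 - mh (bk hac' j) 0) ^+ 2 <= G (STone a *m u).
    rewrite /G (bigD1 j) //= lerDl; apply: sumr_ge0 => j' _.
    by rewrite mulr_ge0 ?sqr_ge0.
  rewrite hr1 mul1r hbk => hle2.
  have : ((STone a *m u) i 0 - mh i 0) ^+ 2 == 0.
    by rewrite eq_le sqr_ge0 andbT; lra.
  by rewrite sqrf_eq0 subr_eq0 => /eqP.
move=> e v; rewrite !hF !key e hGmh add0r.
have := hG0 (STone a *m v); lra.
Qed.
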